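(* In every finite three-player extensive-form game with perfect recall, $\Xi_T=\operatorname{co}\Xi^*_{T1}=\operatorname{co}\Xi^*_{T2}=\operatorname{co}(\Xi^*_{T1}\cup\Xi^*_{T2})$, where $\operatorname{co}$ denotes convex hull.
   Context: A finite extensive-form game is played on a tree; each internal node belongs to one of the players $T1,T2,O$ or to chance. The nodes of player $i$ are partitioned into information sets $\mathcal I_i$; all nodes of $I\in\mathcal I_i$ share the action set $A_I$. Perfect recall is assumed. The sequences of player $i$ are $\Sigma_i=\{(I,a):I\in\mathcal I_i,a\in A_I\}\cup\{\varnothing\}$. For an information set $I$ of player $i$, $\sigma(I)$ denotes the last pair $(I',a')$ of player $i$ on the root-to-$I$ path, or $\varnothing$ if $i$ does not act before $I$. Two information sets $I_i\in\mathcal I_i$, $I_j\in\mathcal I_j$ are connected ($I_i\rightleftharpoons I_j$) if there exist $v\in I_i$, $w\in I_j$ such that the root-to-$v$ path passes through $w$ or vice versa. A pair $(\sigma_i,\sigma_j)$ is relevant ($\sigma_i\bowtie\sigma_j$) if one of them is $\varnothing$ or $\sigma_i=(I_i,a_i)$, $\sigma_j=(I_j,a_j)$ with $I_i\rightleftharpoons I_j$; $\Sigma_{T1}\bowtie\Sigma_{T2}$ is the set of relevant pairs. Similarly $\sigma_i\bowtie I_j$ if $\sigma_i=\varnothing$ or $\sigma_i=(I_i,a_i)$ with $I_i\rightleftharpoons I_j$. A reduced-normal-form plan of player $i$ chooses an action at every information set of $i$ that remains reachable given the plan's own choices; their set is $\Pi_i$. For $\sigma=(I,a)$, $\Pi_i(\sigma)$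 is the set of plans prescribing all of $i$'s actions on the path to $I$ and playing $a$ at $I$; $\Pi_i(\varnothing)=\Pi_i$. The map $f$ sends $\mu_T\in\Delta(\Pi_{T1}\times\Pi_{T2})$ to the vector $f(\mu_T)$ indexed by relevant pairs with $f(\mu_T)[\sigma_{T1},\sigma_{T2}]=\sum_{\pi_1\in\Pi_{T1}(\sigma_{T1}),\pi_2\in\Pi_{T2}(\sigma_{T2})}\mu_T(\pi_1,\pi_2)$; $\Xi_T=f(\Delta(\Pi_{T1}\times\Pi_{T2}))$. The von Stengel–Forges polytope $\mathcal V_T$ is the set of nonnegative vectors $\xi$ indexed by relevant pairs with: $\xi[\varnothing,\varnothing]=1$; $\sum_{a\in A_{I}}\xi[(I,a),\sigma_{T2}]=\xi[\sigma(I),\sigma_{T2}]$ for all $I\in\mathcal I_{T1}$, $\sigma_{T2}\in\Sigma_{T2}$ with $I\bowtie\sigma_{T2}$; $\sum_{b\in A_{J}}\xi[\sigma_{T1},(J,b)]=\xi[\sigma_{T1},\sigma(J)]$ for all $J\in\mathcal I_{T2}$, $\sigma_{T1}\in\Sigma_{T1}$ with $\sigma_{T1}\bowtie J$. The semi-randomized correlation plans are $\Xi^*_{T1}=\{\xi\in\mathcal V_T:\xi[\varnothing,\sigma_{T2}]\in\{0,1\}\ \forall\sigma_{T2}\in\Sigma_{T2}\}$ and $\Xi^*_{T2}=\{\xi\in\mathcal V_T:\xi[\sigma_{T1},\varnothing]\in\{0,1\}\ \forall\sigma_{T1}\in\Sigma_{T1}\}$. *)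

(* Defs.v *)
From HB Require Import structures.
From mathcomp Require Import all_boot all_order all_algebra.
From mathcomp Require Import reals.
Set Implicit Arguments. Unset Strict Implicit. Unset Printing Implicit Defensive.
Import Order.TTheory GRing.Theory Num.Theory.
Local Open Scope ring_scope.

Inductive player := T1 | T2 | O.

Definition player_eqb (a b : player) : bool :=
  match a, b with T1, T1 | T2, T2 | O, O => true | _, _ => false end.
Lemma player_eqP : Equality.axiom player_eqb.
Proof. by case; case; constructor. Qed.
HB.instance Definition _ := hasDecEq.Build player player_eqP.

(* Payoffs and chance probabilities are
   omitted: none of the objects in the statement depend on them.
   - [parent v] : parent of node v (None for the root);
   - [lab v]    : label of the edge from [parent v] to v (the action played,
                  when the parent is a decision node);
   - [info v]   : Some X if v is a decision node in information set X,
                  None if v is a chance node or a terminal node;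
   - [owner X]  : the player acting at X;  [acts X] : the action set A_I. *)
Record efg := EFG {
  node : finType;
  infoset : finType;
  action : finType;
  parent : node -> option node;
  lab : node -> action;
  info : node -> option infoset;
  owner : infoset -> player;
  acts : infoset -> {set action}
}.

Section Game.
Variable G : efg.
Local Notation V := (node G).
Local Notation Inf := (infoset G).
Local Notation Act := (action G).

Fixpoint up (n : nat) (v : V) : seq (V * V) :=
  match n with
  | 0 => [::]
  | n'.+1 => if parent v is Some u then rcons (up n' u) (u, v) else [::]
  end.
Definition path_to (v : V) : seq (V * V) := up #|V| v.
Definition anc (v : V) : seq V := [seq p.1 | p <- path_to v].

Definition ownseq (i : player) (v : V) : seq (Inf * Act) :=
  pmap (fun p : V * V => if info p.1 is Some X then
          (if owner X == i then Some (X, lab p.2) else None) else None)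
       (path_to v).

Definition wf_game : Prop :=
  (exists r : V, parent r = None /\ forall v, parent v = None -> v = r) /\
  (exists d : V -> nat, forall v u, parent v = Some u -> d v = (d u).+1) /\
  (forall X : Inf, exists v, info v = Some X) /\
  (forall X : Inf, acts X != set0) /\
  (forall (v : V) (X : Inf), info v = Some X ->
     (forall w, parent w = Some v -> lab w \in acts X) /\
     (forall a, a \in acts X -> exists! w, parent w = Some v /\ lab w = a)) /\
  (* perfect recall *)
  (forall v w X, info v = Some X -> info w = Some X ->
     ownseq (owner X) v = ownseq (owner X) w).

(* the sequence of own pairs leading to information set X (well defined
   by perfect recall; computed at some node of X) *)
Definition iseq (X : Inf) : seq (Inf * Act) :=
  if [pick v | info v == Some X] is Some v then ownseq (owner X) v else [::].

(* sequences: None stands for the empty sequence *)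
Definition sq := option (Inf * Act).
Definition isSeq (i : player) (s : sq) : bool :=
  if s is Some (X, a) then (owner X == i) && (a \in acts X) else true.

Definition sigmaI (X : Inf) : sq := last None [seq Some p | p <- iseq X].

Definition connected (X J : Inf) : bool :=
  [exists v : V, exists w : V,
     [&& info v == Some X, info w == Some J & (w \in anc v) || (v \in anc w)]].

Definition relevant (s1 s2 : sq) : bool :=
  [&& isSeq T1 s1, isSeq T2 s2 &
      match s1, s2 with Some (X, _), Some (J, _) => connected X J
                      | _, _ => true end].

Definition rel_si (s : sq) (J : Inf) : bool :=
  if s is Some (X, _) then connected X J else true.

Definition prescribes (pln : {ffun Inf -> option Act}) (p : Inf * Act) : bool :=
  pln p.1 == Some p.2.
Definition reachable (pln : {ffun Inf -> option Act}) (X : Inf) : bool :=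
  all (prescribes pln) (iseq X).
Definition isPlan (i : player) (pln : {ffun Inf -> option Act}) : bool :=
  [forall X, if (owner X == i) && reachable pln X
             then (if pln X is Some a then a \in acts X else false)
             else pln X == None].
Definition plan (i : player) := {pln : {ffun Inf -> option Act} | isPlan i pln}.

Definition inPi (i : player) (s : sq) (pln : plan i) : bool :=
  if s is Some (X, a) then (val pln X == Some a) && reachable (val pln) X
  else true.

Definition RP := {x : sq * sq | relevant x.1 x.2}.

Definition at_ (R : realType) (xi : {ffun RP -> R}) (s1 s2 : sq) : R :=
  if @insub _ (fun x : sq * sq => relevant x.1 x.2) RP (s1, s2) is Some k
  then xi k else 0.

Definition fmap (R : realType) (mu : {ffun plan T1 * plan T2 -> R}) : {ffun RP -> R} :=
  [ffun k : RP => \sum_(p : plan T1 * plan T2 |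
                        inPi (val k).1 p.1 && inPi (val k).2 p.2) mu p].

Definition XiT (R : realType) (xi : {ffun RP -> R}) : Prop :=
  exists mu : {ffun plan T1 * plan T2 -> R},
    (forall p, 0 <= mu p) /\ \sum_p mu p = 1 /\ xi = fmap mu.

Definition VT (R : realType) (xi : {ffun RP -> R}) : Prop :=
  (forall k, 0 <= xi k) /\
  at_ xi None None = 1 /\
  (forall (X : Inf) (s2 : sq), owner X = T1 -> isSeq T2 s2 -> rel_si s2 X ->
     \sum_(a in acts X) at_ xi (Some (X, a)) s2 = at_ xi (sigmaI X) s2) /\
  (forall (J : Inf) (s1 : sq), owner J = T2 -> isSeq T1 s1 -> rel_si s1 J ->
     \sum_(b in acts J) at_ xi s1 (Some (J, b)) = at_ xi s1 (sigmaI J)).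

Definition XiStar1 (R : realType) (xi : {ffun RP -> R}) : Prop :=
  VT xi /\ forall s2, isSeq T2 s2 -> at_ xi None s2 = 0 \/ at_ xi None s2 = 1.
Definition XiStar2 (R : realType) (xi : {ffun RP -> R}) : Prop :=
  VT xi /\ forall s1, isSeq T1 s1 -> at_ xi s1 None = 0 \/ at_ xi s1 None = 1.

End Game.

Definition co (R : realType) (M : lmodType R) (S : M -> Prop) (x : M) : Prop :=
  exists (n : nat) (w : 'I_n -> R) (y : 'I_n -> M),
    (forall j, 0 <= w j) /\ \sum_j w j = 1 /\ (forall j, S (y j)) /\
    x = \sum_j w j *: y j.

Definition set_eq (T : Type) (A B : T -> Prop) : Prop := forall x, A x <-> B x.

(* Main.v *)
Require Import Defs.
From HB Require Import structures.
From mathcomp Require Import all_boot all_order all_algebra.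
From mathcomp Require Import reals.
Set Implicit Arguments. Unset Strict Implicit. Unset Printing Implicit Defensive.
Import Order.TTheory GRing.Theory Num.Theory.

Section Tree.
Variable G : efg.
Hypothesis wf : wf_game G.
Local Notation V := (node G).
Local Notation Inf := (infoset G).
Local Notation Act := (action G).

Fixpoint pa (k : nat) (v : V) : option V :=
  match k with 0 => Some v | k'.+1 => if parent v is Some u then pa k' u else None end.

Lemma tree_ind (P : V -> Prop) :
  (forall v, (forall u, parent v = Some u -> P u) -> P v) -> forall v, P v.
Proof.
move=> IH v.
have [_ [[d hd] _]] := wf.
suff H : forall n v, d v < n -> P v by exact: (H _ v (ltnSn _)).
elim=> [|n IHn] {}v hv; first by rewrite ltn0 in hv.
apply: IH => u hu; apply: IHn.
by move: hv; rewrite (hd _ _ hu) ltnS.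
Qed.


Lemma pa_d (d : V -> nat) : (forall v u, parent v = Some u -> d v = (d u).+1) ->
  forall k v w, pa k v = Some w -> d v = d w + k.
Proof.
move=> hd; elim=> [|k IH] v w /=; first by case=> ->; rewrite addn0.
case hp: (parent v) => [u|] // /IH e.
by rewrite (hd _ _ hp) e addnS.
Qed.

Lemma pa_le n (v w : V) : pa n v = Some w -> forall m, m <= n -> exists w', pa m v = Some w'.
Proof.
elim: n v w => [|n IH] v w /=.
  by move=> _ [|m] // _; exists v.
case hp: (parent v) => [u|] // h [|m] hm; first by exists v.
by have [w' hw'] := IH _ _ h m hm; exists w'; rewrite /= hp.
Qed.

Lemma pa_None (v : V) : pa #|V| v = None.
Proof.
have [_ [[d hd] _]] := wf.
case h: (pa #|V| v) => [w|] //; exfalso.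
pose f (i : 'I_#|V|.+1) := odflt v (pa i v).
have hf : forall i : 'I_#|V|.+1, pa i v = Some (f i).
  move=> i; have [w' hw'] := pa_le h (m := i) (ltn_ord i).
  by rewrite /f hw'.
have inj : injective f.
  move=> i j e; apply: val_inj => /=.
  have := pa_d hd (hf i); have := pa_d hd (hf j); rewrite e => ->.
  by move/eqP; rewrite eqn_add2l => /eqP.
by have := leq_card f inj; rewrite card_ord ltnn.
Qed.

Lemma up_stable n m (v : V) : n <= m -> pa n v = None -> up n v = up m v.
Proof.
elim: n m v => [|n IH] [|m] v //= hnm.
case hp: (parent v) => [u|] // h.
by rewrite (IH m u hnm h).
Qed.

Lemma path_par (v u : V) : parent v = Some u -> path_to v = rcons (path_to u) (u, v).
Proof.
move=> hp; rewrite /path_to.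
have := pa_None v.
have : 0 < #|V| by apply/card_gt0P; exists v.
case: #|V| => [//|N] _ /=; rewrite hp => h.
by rewrite (up_stable (leqnSn N) h).
Qed.

Lemma path_root (v : V) : parent v = None -> path_to v = [::].
Proof.
move=> hp; rewrite /path_to.
have : 0 < #|V| by apply/card_gt0P; exists v.
by case: #|V| => [//|N] _ /=; rewrite hp.
Qed.

Lemma anc_par (v u : V) : parent v = Some u -> anc v = rcons (anc u) u.
Proof. by move=> hp; rewrite /anc (path_par hp) map_rcons. Qed.

Lemma anc_root (v : V) : parent v = None -> anc v = [::].
Proof. by move=> hp; rewrite /anc (path_root hp). Qed.

Lemma anc_trans (u v w : V) : u \in anc v -> v \in anc w -> u \in anc w.
Proof.
move=> huv; elim/tree_ind: w => w IH.
case hp: (parent w) => [p|]; last by rewrite anc_root.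
rewrite (anc_par hp) mem_rcons in_cons => /orP[/eqP e|h].
  by rewrite mem_rcons in_cons -e huv orbT.
by rewrite mem_rcons in_cons (IH p hp h) orbT.
Qed.

Lemma anc_cmp (a b v : V) : a \in anc v -> b \in anc v ->
  [\/ a = b, a \in anc b | b \in anc a].
Proof.
elim/tree_ind: v => v IH.
case hp: (parent v) => [p|]; last by rewrite anc_root.
rewrite (anc_par hp) !mem_rcons !in_cons.
case/orP=> [/eqP ->|ha]; case/orP=> [/eqP ->|hb].
- by constructor 1.
- by constructor 3.
- by constructor 2.
- exact: IH hp ha hb.
Qed.

Definition ostep (i : player) (p : V * V) : option (Inf * Act) :=
  if info p.1 is Some X then (if owner X == i then Some (X, lab p.2) else None) else None.

Lemma ownseq_par i (v u : V) : parent v = Some u ->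
  ownseq i v = ownseq i u ++ (if ostep i (u, v) is Some q then [:: q] else [::]).
Proof.
move=> hp; rewrite /ownseq (path_par hp) -cats1 pmap_cat /=.
by rewrite /ostep; case: (info u) => // X; case: (owner X == i).
Qed.

Lemma ownseq_root i (v : V) : parent v = None -> ownseq i v = [::].
Proof. by move=> hp; rewrite /ownseq (path_root hp). Qed.

Lemma ownseq_last i (v : V) s (X : Inf) (a : Act) : ownseq i v = rcons s (X, a) ->
  exists u w, [/\ u \in anc v, info u = Some X, owner X = i, ownseq i u = s &
                  parent w = Some u /\ lab w = a].
Proof.
elim/tree_ind: v s => v IH s.
case hp: (parent v) => [p|]; last by rewrite ownseq_root //; case: s.
rewrite (ownseq_par _ hp) /ostep /=.
have anc1 : p \in anc v by rewrite (anc_par hp) mem_rcons mem_head.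
have ancS : forall x, x \in anc p -> x \in anc v.
  by move=> x hx; rewrite (anc_par hp) mem_rcons in_cons hx orbT.
have rec : ownseq i p = rcons s (X, a) -> exists u w, [/\ u \in anc v, info u = Some X,
   owner X = i, ownseq i u = s & parent w = Some u /\ lab w = a].
  move=> /IH [//|u [w [h1 h2 h3 h4 h5]]].
  by exists u, w; split=> //; apply: ancS.
case hi: (info p) => [Y|]; last by rewrite cats0; apply: rec.
case: eqP => hY; last by rewrite cats0; apply: rec.
rewrite cats1 => /rcons_inj [<- <- <-].
by exists p, v; split.
Qed.


Lemma iseq_node (v : V) (X : Inf) : info v = Some X -> iseq X = ownseq (owner X) v.
Proof.
have [_ [_ [_ [_ [_ hpr]]]]] := wf.
move=> hv; rewrite /iseq; case: pickP => [w /eqP hw|h].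
  exact: hpr hw hv.
by have := h v; rewrite hv eqxx.
Qed.

Lemma sigmaI_spec (X : Inf) : (sigmaI X = None /\ iseq X = [::]) \/
  exists X' a', [/\ sigmaI X = Some (X', a'), iseq X = rcons (iseq X') (X', a'),
                   owner X' = owner X & a' \in acts X'].
Proof.
have [_ [_ [hinfo [_ [hchild _]]]]] := wf.
have [v hv] := hinfo X.
move: (iseq_node hv); rewrite /sigmaI.
case/lastP: (iseq X) => [|s [X' a']] E; first by left.
right; exists X', a'; rewrite map_rcons last_rcons.
have [u [w [_ hu ho hs [hw hl]]]] := ownseq_last (esym E).
split=> //.
  by rewrite (iseq_node hu) ho hs.
by rewrite -hl; apply: (hchild u X' hu).1.
Qed.

Lemma sigmaI_Some (X X' : Inf) a' : sigmaI X = Some (X', a') ->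
  [/\ iseq X = rcons (iseq X') (X', a'), owner X' = owner X & a' \in acts X'].
Proof.
case: (sigmaI_spec X) => [[-> //]|[X'' [a'' [-> h1 h2 h3]]]] [<- <-].
by split.
Qed.

Lemma sigmaI_None (X : Inf) : sigmaI X = None -> iseq X = [::].
Proof. by case: (sigmaI_spec X) => [[_ ->]|[X' [a' [-> _ _ _]]]]. Qed.

Lemma inf_ind (P : Inf -> Prop) :
  (forall X, (forall X' a', sigmaI X = Some (X', a') -> P X') -> P X) -> forall X, P X.
Proof.
move=> IH X.
suff H : forall n X, size (iseq X) < n -> P X by exact: (H _ X (ltnSn _)).
elim=> [|n IHn] {}X hX; first by rewrite ltn0 in hX.
apply: IH => X' a' /sigmaI_Some [e _ _]; apply: IHn.
by move: hX; rewrite e size_rcons ltnS.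
Qed.

Lemma seq_ind (i : player) (P : sq G -> Prop) : P None ->
  (forall X a, owner X = i -> a \in acts X -> P (sigmaI X) -> P (Some (X, a))) ->
  forall s, isSeq i s -> P s.
Proof.
move=> h0 hS [[X a]|] //= /andP[/eqP hX ha].
elim/inf_ind: X a hX ha => X IH a hX ha.
apply: hS => //.
case E: (sigmaI X) => [[X' a']|] //.
have [_ ho hacts] := sigmaI_Some E.
exact: (IH X' a' E a' (etrans ho hX) hacts).
Qed.

Lemma isSeq_sigmaI (X : Inf) : isSeq (owner X) (sigmaI X).
Proof.
case E: (sigmaI X) => [[X' a']|] //=.
by have [_ -> ->] := sigmaI_Some E; rewrite eqxx.
Qed.

Lemma connected_sym (X J : Inf) : connected X J = connected J X.
Proof.
rewrite /connected.
apply/existsP/existsP => [[v /existsP [w /and3P [h1 h2 h3]]]|[v /existsP [w /and3P [h1 h2 h3]]]];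
  exists w; apply/existsP; exists v; by rewrite h1 h2 orbC.
Qed.

Lemma connected_up (X J X' : Inf) a' : owner X != owner J -> connected X J ->
  sigmaI X = Some (X', a') -> connected X' J.
Proof.
move=> hown /existsP [v /existsP [w /and3P [/eqP hv /eqP hw hvw]]] E.
have [e ho _] := sigmaI_Some E.
have := iseq_node hv; rewrite e => /esym/ownseq_last [u [w' [hu hu' _ _ _]]].
apply/existsP; exists u; apply/existsP; exists w.
rewrite hu' hw !eqxx /=.
case/orP: hvw => [hwv|hvw].
  case: (anc_cmp hu hwv) => [euw|->|->]; rewrite ?orbT //.
  by move: hu'; rewrite euw hw => -[eJ]; move: hown; rewrite eJ ho eqxx.
by rewrite (anc_trans hu hvw) orbT.
Qed.

Section Real.
Variable R : realType.
Local Open Scope ring_scope.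

Lemma le_sum_term (I : finType) (A : pred I) (F : I -> R) a :
  a \in A -> (forall b, b \in A -> 0 <= F b) -> F a <= \sum_(b in A) F b.
Proof.
move=> ha hF; rewrite (bigD1 a) //= lerDl sumr_ge0 // => b /andP [hb _].
exact: hF.
Qed.

Lemma sum_delta (T : finType) (P : pred T) (q : T) :
  \sum_(p | P p) ((p == q)%:R : R) = (P q)%:R.
Proof.
rewrite big_mkcond (bigD1 q) //= eqxx big1 => [|p npq].
  by case: (P q); rewrite addr0.
by case: (P p); rewrite // (negbTE npq).
Qed.

Lemma exists_min (T : eqType) (s : seq T) (F : T -> R) x : x \in s ->
  exists2 m, m \in s & forall z, z \in s -> F m <= F z.
Proof.
elim: s x => [//|y s IH] x _.
case: (boolP (s == [::])) => [/eqP ->|hs].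
  by exists y => [|z]; rewrite ?mem_head // mem_seq1 => /eqP ->.
have [z0 hz0] : exists z0, z0 \in s by case: s hs {IH} => [//|z0 s'] _; exists z0; rewrite mem_head.
have [m hm hmin] := IH z0 hz0.
case: (leP (F y) (F m)) => hym.
  exists y; first by rewrite mem_head.
  by move=> z; rewrite in_cons => /orP [/eqP ->//|/hmin]; apply: le_trans.
exists m; first by rewrite in_cons hm orbT.
by move=> z; rewrite in_cons => /orP [/eqP ->|/hmin //]; apply: ltW.
Qed.

Definition flow (i : player) (y : sq G -> R) :=
  forall X : Inf, owner X = i -> \sum_(a in acts X) y (Some (X, a)) = y (sigmaI X).

Lemma reach_sigma i (pln : plan G i) (X : Inf) :
  reachable (val pln) X = inPi (sigmaI X) pln.
Proof.
case: (sigmaI_spec X) => [[-> e]|[X' [a' [-> e _ _]]]].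
  by rewrite /reachable e.
by rewrite /reachable e all_rcons /= andbC.
Qed.

Lemma planP i (pln : plan G i) (X : Inf) : owner X = i -> reachable (val pln) X ->
  exists2 a, val pln X = Some a & a \in acts X.
Proof.
move=> ho hr; have := valP pln; move/forallP/(_ X).
rewrite ho eqxx hr /=; case: (val pln X) => [a ha|//].
by exists a.
Qed.

Lemma inPi_isSeq i (pln : plan G i) s : inPi s pln -> isSeq i s.
Proof.
case: s => [[X a]|] //= /andP [/eqP e hr].
have := valP pln; move/forallP/(_ X).
by rewrite e hr andbT; case: (owner X == i).
Qed.

Lemma plan_flow i (pln : plan G i) (X : Inf) : owner X = i ->
  \sum_(a in acts X) ((inPi (Some (X, a)) pln)%:R : R) = (inPi (sigmaI X) pln)%:R.
Proof.
move=> ho; rewrite -reach_sigma /inPi.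
case: (boolP (reachable (val pln) X)) => hr.
  have [a0 e ha0] := planP ho hr.
  rewrite (bigD1 a0) // e eqxx big1 => [|a /andP [_ na]]; first by rewrite /= addr0.
  by rewrite andbT (inj_eq (@Some_inj _)) eq_sym (negbTE na).
by rewrite big1 // => a _; rewrite andbF.
Qed.

Lemma flow_zero i (z : sq G -> R) : (forall s, isSeq i s -> 0 <= z s) -> flow i z ->
  z None = 0 -> forall s, isSeq i s -> z s = 0.
Proof.
move=> hnn hf h0; apply: seq_ind => // X a ho ha hs.
apply/eqP; rewrite eq_le hnn /=; last by rewrite ho eqxx ha.
rewrite andbT -hs -(hf X ho).
apply: (le_sum_term (F := fun b => z (Some (X, b)))) => // b hb.
by apply: hnn; rewrite /= ho eqxx hb.
Qed.

Definition chs (y : sq G -> R) (X : Inf) : option Act :=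
  if [pick a in acts X | 0 < y (Some (X, a))] is Some a then Some a
  else [pick a in acts X].
Definition okp y (X : Inf) := all (fun p => chs y p.1 == Some p.2) (iseq X).
Definition mkplan i y : {ffun Inf -> option Act} :=
  [ffun X => if (owner X == i) && okp y X then chs y X else None].

Lemma chsP y X : exists2 a, chs y X = Some a & a \in acts X.
Proof.
have [_ [_ [_ [hne _]]]] := wf.
rewrite /chs; case: pickP => [a /andP [ha _]|_]; first by exists a.
case: pickP => [a ha|h]; first by exists a.
by have /set0Pn [a ha] := hne X; move: (h a); rewrite ha.
Qed.

Lemma chs_pos i y X a : (forall s, isSeq i s -> 0 <= y s) -> flow i y -> owner X = i ->
  chs y X = Some a -> 0 < y (sigmaI X) -> 0 < y (Some (X, a)).
Proof.
move=> hnn hf ho; rewrite /chs; case: pickP => [b /andP [hb hpos] [<-]//|hnone _].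
rewrite -(hf X ho) => hsum; exfalso; move: hsum; apply/negP; rewrite -leNgt.
by apply: sumr_le0 => b hb; move: (hnone b); rewrite hb /= => /negbT; rewrite -leNgt.
Qed.

Lemma mkplan_reach i y X : owner X = i -> reachable (mkplan i y) X = okp y X.
Proof.
elim/inf_ind: X => X IH ho.
case: (sigmaI_spec X) => [[_ e]|[X' [a' [E e ho' _]]]].
  by rewrite /reachable /okp e.
rewrite /reachable /okp e !all_rcons /=.
rewrite -/(reachable _ X') -/(okp y X') (IH X' a' E) ?ho' //.
rewrite /prescribes /= ffunE ho' ho eqxx /=.
by case: (okp y X') => //=; rewrite andbF.
Qed.

Lemma mkplan_isPlan i y : isPlan i (mkplan i y).
Proof.
apply/forallP => X; rewrite ffunE.
case: (owner X =P i) => ho /=; last by [].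
rewrite mkplan_reach //; case: (okp y X) => //=.
by have [a -> ha] := chsP y X.
Qed.

Lemma okp_pos i y X : (forall s, isSeq i s -> 0 <= y s) -> flow i y -> 0 < y None ->
  owner X = i -> okp y X -> 0 < y (sigmaI X).
Proof.
move=> hnn hf h0; elim/inf_ind: X => X IH ho.
case: (sigmaI_spec X) => [[-> _ //]|[X' [a' [E e ho' _]]]].
rewrite /okp e all_rcons /= -/(okp y X') => /andP [/eqP hc hok].
rewrite E; apply: (chs_pos hnn hf) => //; first by rewrite ho'.
by apply: (IH X' a' E) => //; rewrite ho'.
Qed.

Lemma plan_pos i (y : sq G -> R) : (forall s, isSeq i s -> 0 <= y s) -> flow i y ->
  0 < y None -> exists pln : plan G i, forall s, inPi s pln -> 0 < y s.
Proof.
move=> hnn hf h0.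
exists (exist _ (mkplan i y) (mkplan_isPlan i y)) => -[[X a]|] //=.
rewrite ffunE; case: (boolP ((owner X == i) && okp y X)) => //= /andP [/eqP ho hok].
move=> /andP [/eqP hc _]; apply: (chs_pos hnn hf) => //.
exact: (okp_pos hnn hf h0 ho hok).
Qed.

Lemma decomp i (y : sq G -> R) : (forall s, isSeq i s -> 0 <= y s) -> flow i y ->
  exists mu : plan G i -> R, (forall p, 0 <= mu p) /\
    forall s, isSeq i s -> y s = \sum_(p | inPi s p) mu p.
Proof.
suff H : forall n (y : sq G -> R), (#|[pred s : sq G | isSeq i s && (y s != 0%R)]| < n)%N ->
    (forall s, isSeq i s -> 0 <= y s) -> flow i y ->
    exists mu : plan G i -> R, (forall p, 0 <= mu p) /\
    forall s, isSeq i s -> y s = \sum_(p | inPi s p) mu p.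
  by move=> hnn hf; exact: (H _ y (ltnSn _) hnn hf).
elim=> [|n IHn] {}y hc hnn hf; first by rewrite ltn0 in hc.
case: (eqVneq (y None) 0) => hy0.
  exists (fun _ => 0); split=> // s hs.
  by rewrite (flow_zero hnn hf hy0 hs) big1.
have ypos : 0 < y None by rewrite lt_def hy0 hnn.
have [pln hpos] := plan_pos hnn hf ypos.
have hN : None \in [seq s <- enum {: option (Inf * Act)} | inPi s pln] by rewrite mem_filter mem_enum.
have [s0 hs0 hmin] := exists_min y hN.
move: hs0; rewrite mem_filter mem_enum andbT => hs0.
set lam := y s0.
have lpos : 0 < lam := hpos _ hs0.
have hge : forall s, inPi s pln -> lam <= y s.
  by move=> s hs; apply: hmin; rewrite mem_filter mem_enum hs.
pose y' s := y s - lam * (inPi s pln)%:R.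
have hnn' : forall s, isSeq i s -> 0 <= y' s.
  move=> s hs; rewrite /y'; case: (boolP (inPi s pln)) => h.
    by rewrite mulr1 subr_ge0; apply: hge.
  by rewrite mulr0 subr0; apply: hnn.
have hf' : flow i y'.
  move=> X ho; rewrite /y' sumrB -mulr_sumr (hf X ho).
  by rewrite (plan_flow pln ho).
have hc' : (#|[pred s : sq G | isSeq i s && (y' s != 0%R)]| < n)%N.
  rewrite -ltnS; apply: leq_trans hc; rewrite ltnS; apply: proper_card; apply/properP; split.
    apply/subsetP => s; rewrite !inE => /andP [hs hy']; rewrite hs /=.
    case: (boolP (inPi s pln)) => h; first by rewrite (gt_eqF (hpos _ h)).
    by move: hy'; rewrite /y' (negbTE h) mulr0 subr0.
  exists s0; rewrite !inE; first by rewrite (inPi_isSeq hs0) (gt_eqF lpos).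
  by rewrite /y' hs0 mulr1 subrr eqxx andbF.
have [mu' [hmu' hsum']] := IHn y' hc' hnn' hf'.
exists (fun p => mu' p + lam * (p == pln)%:R); split.
  by move=> p; apply: addr_ge0 => //; apply: mulr_ge0 (ltW lpos) (ler0n _ _).
move=> s hs; rewrite big_split /= -mulr_sumr sum_delta -(hsum' s hs) /y'.
by rewrite subrK.
Qed.

End Real.

Section Xi.
Variable R : realType.
Local Open Scope ring_scope.
Local Notation P := (plan G T1 * plan G T2)%type.

Lemma at_rel (xi : {ffun RP G -> R}) s1 s2 (h : relevant s1 s2) :
  at_ xi s1 s2 = xi (Sub (s1, s2) h).
Proof. by rewrite /at_ insubT. Qed.

Lemma at_nrel (xi : {ffun RP G -> R}) s1 s2 : ~~ relevant s1 s2 -> at_ xi s1 s2 = 0.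
Proof. by move=> h; rewrite /at_ insubF //; apply: negbTE. Qed.

Lemma at_val (xi : {ffun RP G -> R}) (k : RP G) : at_ xi (val k).1 (val k).2 = xi k.
Proof. by rewrite /at_ -surjective_pairing valK. Qed.

Lemma at_ge0 (xi : {ffun RP G -> R}) s1 s2 : (forall k, 0 <= xi k) -> 0 <= at_ xi s1 s2.
Proof. by move=> h; rewrite /at_; case: insub. Qed.

Lemma rel_T1 (X : Inf) a s2 : owner X = T1 -> a \in acts X -> isSeq T2 s2 -> rel_si s2 X ->
  relevant (Some (X, a)) s2.
Proof.
move=> ho ha hs hr; rewrite /relevant /= ho eqxx ha hs /=.
by case: s2 hs hr => [[J b]|] //= _; rewrite connected_sym.
Qed.

Lemma rel_T1_sigma (X : Inf) s2 : owner X = T1 -> isSeq T2 s2 -> rel_si s2 X ->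
  relevant (sigmaI X) s2.
Proof.
move=> ho hs hr; rewrite /relevant hs -ho isSeq_sigmaI /=.
case E: (sigmaI X) => [[X' a']|] //; case: s2 hs hr => [[J b]|] // /andP [/eqP hJ _] /= hc.
apply: (connected_up _ _ E); first by rewrite ho hJ.
by rewrite connected_sym.
Qed.

Lemma rel_T2 (J : Inf) b s1 : owner J = T2 -> b \in acts J -> isSeq T1 s1 -> rel_si s1 J ->
  relevant s1 (Some (J, b)).
Proof.
move=> ho hb hs hr; rewrite /relevant /= ho eqxx hb hs /=.
by case: s1 hs hr => [[X a]|].
Qed.

Lemma rel_T2_sigma (J : Inf) s1 : owner J = T2 -> isSeq T1 s1 -> rel_si s1 J ->
  relevant s1 (sigmaI J).
Proof.
move=> ho hs hr; rewrite /relevant hs -ho isSeq_sigmaI /=.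
case E: (sigmaI J) => [[J' b']|] //; case: s1 hs hr => [[X a]|] // /andP [/eqP hX _] /= hc.
rewrite connected_sym; apply: (connected_up _ _ E); first by rewrite ho hX.
by rewrite connected_sym.
Qed.

Lemma relevant_T1 (X : Inf) a s2 : relevant (Some (X, a)) s2 ->
  [/\ owner X = T1, a \in acts X, isSeq T2 s2 & rel_si s2 X].
Proof.
case/and3P => /andP [/eqP ho ha] hs hc; split => //.
by case: s2 hs hc => [[J b]|] //= _; rewrite connected_sym.
Qed.

Lemma relevant_T2 (J : Inf) b s1 : relevant s1 (Some (J, b)) ->
  [/\ owner J = T2, b \in acts J, isSeq T1 s1 & rel_si s1 J].
Proof.
by case/and3P => hs /andP [/eqP ho hb] hc; split => //; case: s1 hs hc => [[X a]|].
Qed.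

Lemma at_fmap (mu : {ffun P -> R}) s1 s2 : relevant s1 s2 ->
  at_ (fmap mu) s1 s2 = \sum_p mu p * ((inPi s1 p.1)%:R * (inPi s2 p.2)%:R).
Proof.
move=> h; rewrite (at_rel _ h) ffunE big_mkcond /=; apply: eq_bigr => p _.
by case: (inPi s1 p.1); case: (inPi s2 p.2); rewrite /= ?mulr1 ?mulr0.
Qed.

Lemma XiT_VT (mu : {ffun P -> R}) : (forall p, 0 <= mu p) -> \sum_p mu p = 1 ->
  VT (fmap mu).
Proof.
move=> hmu hs; split; [|split; [|split]].
- by move=> k; rewrite ffunE; apply: sumr_ge0.
- rewrite at_fmap // -[X in _ = X]hs; apply: eq_bigr => p _; by rewrite /= !mulr1.
- move=> X s2 ho hs2 hr.
  rewrite (at_fmap _ (rel_T1_sigma ho hs2 hr)).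
  rewrite (eq_bigr (fun a => \sum_p mu p * ((inPi (Some (X, a)) p.1)%:R * (inPi s2 p.2)%:R)));
    last by move=> a ha; rewrite at_fmap // rel_T1.
  rewrite exchange_big; apply: eq_bigr => p _.
  rewrite -mulr_sumr -mulr_suml.
  by rewrite (plan_flow R p.1 ho).
- move=> J s1 ho hs1 hr.
  rewrite (at_fmap _ (rel_T2_sigma ho hs1 hr)).
  rewrite (eq_bigr (fun b => \sum_p mu p * ((inPi s1 p.1)%:R * (inPi (Some (J, b)) p.2)%:R)));
    last by move=> b hb; rewrite at_fmap // rel_T2.
  rewrite exchange_big; apply: eq_bigr => p _.
  rewrite -mulr_sumr -mulr_sumr.
  by rewrite (plan_flow R p.2 ho).
Qed.

End Xi.

Section Xi2.
Variable R : realType.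
Local Open Scope ring_scope.
Local Notation P := (plan G T1 * plan G T2)%type.

Lemma walk1_le (xi : {ffun RP G -> R}) : VT xi ->
  forall s1 s2, relevant s1 s2 -> at_ xi s1 s2 <= at_ xi None s2.
Proof.
move=> [hnn [_ [hT1 _]]] s1 s2 hr.
have hs1 : isSeq T1 s1 by case/and3P: hr.
move: s1 hs1 hr; apply: (seq_ind (i := T1)
  (P := fun s1 => relevant s1 s2 -> at_ xi s1 s2 <= at_ xi None s2)) => // X a ho ha IH hr.
have [_ _ hs2 hrel] := relevant_T1 hr.
apply: le_trans (IH (rel_T1_sigma ho hs2 hrel)).
rewrite -(hT1 X s2 ho hs2 hrel).
apply: (le_sum_term (F := fun b => at_ xi (Some (X, b)) s2)) => // b _.
exact: at_ge0.
Qed.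

Lemma walk2_le (xi : {ffun RP G -> R}) : VT xi ->
  forall s1 s2, relevant s1 s2 -> at_ xi s1 s2 <= at_ xi s1 None.
Proof.
move=> [hnn [_ [_ hT2]]] s1 s2 hr.
have hs2 : isSeq T2 s2 by case/and3P: hr.
move: s2 hs2 hr; apply: (seq_ind (i := T2)
  (P := fun s2 => relevant s1 s2 -> at_ xi s1 s2 <= at_ xi s1 None)) => // J b ho hb IH hr.
have [_ _ hs1 hrel] := relevant_T2 hr.
apply: le_trans (IH (rel_T2_sigma ho hs1 hrel)).
rewrite -(hT2 J s1 ho hs1 hrel).
apply: (le_sum_term (F := fun b => at_ xi s1 (Some (J, b)))) => // b' _.
exact: at_ge0.
Qed.

Lemma walk2_eq (xi : {ffun RP G -> R}) (pi2 : plan G T2) : VT xi ->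
  (forall s2, isSeq T2 s2 -> ~~ inPi s2 pi2 -> at_ xi None s2 = 0) ->
  forall s1 s2, relevant s1 s2 -> inPi s2 pi2 -> at_ xi s1 s2 = at_ xi s1 None.
Proof.
move=> hV hz s1 s2 hr; have hV' := hV; move: hV' => [hnn [_ [_ hT2]]].
have hs2 : isSeq T2 s2 by case/and3P: hr.
move: s2 hs2 hr; apply: (seq_ind (i := T2)
  (P := fun s2 => relevant s1 s2 -> inPi s2 pi2 -> at_ xi s1 s2 = at_ xi s1 None)) => //.
move=> J b ho hb IH hr hin.
have [_ _ hs1 hrel] := relevant_T2 hr.
move: hin; rewrite /inPi => /andP [/eqP e hreach].
rewrite -(IH (rel_T2_sigma ho hs1 hrel)); last by rewrite -reach_sigma.
rewrite -(hT2 J s1 ho hs1 hrel) (bigD1 b) //= big1 ?addr0 // => b' /andP [hb' nb'].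
apply/eqP; rewrite eq_le at_ge0 // andbT.
apply: le_trans (walk1_le hV (rel_T2 ho hb' hs1 hrel)) _.
rewrite hz //; first by rewrite /= ho eqxx hb'.
by rewrite /inPi e (inj_eq (@Some_inj _)) eq_sym (negbTE nb').
Qed.

Lemma walk1_eq (xi : {ffun RP G -> R}) (pi1 : plan G T1) : VT xi ->
  (forall s1, isSeq T1 s1 -> ~~ inPi s1 pi1 -> at_ xi s1 None = 0) ->
  forall s1 s2, relevant s1 s2 -> inPi s1 pi1 -> at_ xi s1 s2 = at_ xi None s2.
Proof.
move=> hV hz s1 s2 hr; have hV' := hV; move: hV' => [hnn [_ [hT1 _]]].
have hs1 : isSeq T1 s1 by case/and3P: hr.
move: s1 hs1 hr; apply: (seq_ind (i := T1)
  (P := fun s1 => relevant s1 s2 -> inPi s1 pi1 -> at_ xi s1 s2 = at_ xi None s2)) => //.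
move=> X a ho ha IH hr hin.
have [_ _ hs2 hrel] := relevant_T1 hr.
move: hin; rewrite /inPi => /andP [/eqP e hreach].
rewrite -(IH (rel_T1_sigma ho hs2 hrel)); last by rewrite -reach_sigma.
rewrite -(hT1 X s2 ho hs2 hrel) (bigD1 a) //= big1 ?addr0 // => a' /andP [ha' na'].
apply/eqP; rewrite eq_le at_ge0 // andbT.
apply: le_trans (walk2_le hV (rel_T1 ho ha' hs2 hrel)) _.
rewrite hz //; first by rewrite /= ho eqxx ha'.
by rewrite /inPi e (inj_eq (@Some_inj _)) eq_sym (negbTE na').
Qed.

Lemma sum_prod (F1 : plan G T1 -> R) (F2 : plan G T2 -> R)
  (P1 : pred (plan G T1)) (P2 : pred (plan G T2)) :
  \sum_(p : P | P1 p.1 && P2 p.2) F1 p.1 * F2 p.2 =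
  (\sum_(p1 | P1 p1) F1 p1) * (\sum_(p2 | P2 p2) F2 p2).
Proof.
rewrite mulr_suml (eq_bigr (fun i => \sum_(j | P2 j) F1 i * F2 j)); last first.
  by move=> i _; rewrite mulr_sumr.
by rewrite pair_big.
Qed.

Lemma sum_deltaT (T : finType) (q : T) (F : T -> R) :
  \sum_p F p * (p == q)%:R = F q.
Proof.
rewrite (bigD1 q) //= eqxx mulr1 big1 ?addr0 // => p /negbTE ->.
by rewrite mulr0.
Qed.

Lemma sum_deltaT' (T : finType) (q : T) (F : T -> R) :
  \sum_p (p == q)%:R * F p = F q.
Proof.
rewrite (bigD1 q) //= eqxx mul1r big1 ?addr0 // => p /negbTE ->.
by rewrite mul0r.
Qed.

End Xi2.

Section Xi3.
Variable R : realType.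
Local Open Scope ring_scope.
Local Notation P := (plan G T1 * plan G T2)%type.

Lemma star1_XiT (xi : {ffun RP G -> R}) : XiStar1 xi -> XiT xi.
Proof.
move=> [hV h01]; have hV' := hV; move: hV' => [hnn [h00 [hT1 hT2]]].
pose y2 := fun s2 => at_ xi None s2.
have hf2 : flow T2 y2 := fun J ho => hT2 J None ho erefl erefl.
have hnn2 : forall s, isSeq T2 s -> 0 <= y2 s by move=> s _; apply: at_ge0.
have [pi2 hpos2] := plan_pos hnn2 hf2 (ltac:(by rewrite /y2 h00 ltr01)).
have hone : forall s, inPi s pi2 -> y2 s = 1.
  move=> s hs; case: (h01 s (inPi_isSeq hs)) => // e.
  by move: (hpos2 s hs); rewrite /y2 e ltxx.
pose z s := y2 s - (inPi s pi2)%:R.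
have hz0 : forall s, isSeq T2 s -> z s = 0.
  apply: (flow_zero (i := T2) (z := z)).
  - move=> s hs; rewrite /z; case: (boolP (inPi s pi2)) => h.
      by rewrite hone // subrr.
    by rewrite subr0; apply: hnn2.
  - move=> J ho; rewrite /z sumrB (hf2 J ho).
    by rewrite (plan_flow R pi2 ho).
  - by rewrite /z hone //= subrr.
have hzero : forall s2, isSeq T2 s2 -> ~~ inPi s2 pi2 -> at_ xi None s2 = 0.
  by move=> s hs hn; have := hz0 s hs; rewrite /z (negbTE hn) subr0.
pose y1 := fun s1 => at_ xi s1 None.
have hf1 : flow T1 y1 := fun X ho => hT1 X None ho erefl erefl.
have hnn1 : forall s, isSeq T1 s -> 0 <= y1 s by move=> s _; apply: at_ge0.
have [mu1 [hmu1 hsum1]] := decomp hnn1 hf1.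
have key : forall s1 s2, relevant s1 s2 -> at_ xi s1 s2 = y1 s1 * (inPi s2 pi2)%:R.
  move=> s1 s2 hr; case: (boolP (inPi s2 pi2)) => h.
    by rewrite mulr1 (walk2_eq hV hzero hr h).
  rewrite mulr0; apply/eqP; rewrite eq_le at_ge0 // andbT.
  have hs2 : isSeq T2 s2 by case/and3P: hr.
  by rewrite -(hzero s2 hs2 h) walk1_le.
exists [ffun p : P => mu1 p.1 * (p.2 == pi2)%:R]; split; [|split].
- by move=> p; rewrite ffunE; apply: mulr_ge0 => //; exact: ler0n.
- rewrite (eq_bigr (fun p : P => mu1 p.1 * (p.2 == pi2)%:R)); last by move=> p _; rewrite ffunE.
  rewrite -(pair_bigA _ (fun p1 p2 => mu1 p1 * (p2 == pi2)%:R)) /=.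
  rewrite (eq_bigr (fun p1 => mu1 p1)); last by move=> p1 _; rewrite sum_deltaT.
  rewrite -h00 -/(y1 None) (hsum1 None erefl).
  by apply: eq_bigl.
- apply/ffunP => k; rewrite ffunE.
  have hk := valP k.
  rewrite -(at_val xi k) (key _ _ hk).
  rewrite (eq_bigr (fun p : P => mu1 p.1 * (p.2 == pi2)%:R)); last by move=> p _; rewrite ffunE.
  rewrite (sum_prod mu1 (fun p2 => (p2 == pi2)%:R) (fun p1 => inPi (val k).1 p1)
     (fun p2 => inPi (val k).2 p2)).
  rewrite sum_delta -(hsum1 _ _) //.
  by case/and3P: hk.
Qed.

Lemma star2_XiT (xi : {ffun RP G -> R}) : XiStar2 xi -> XiT xi.
Proof.
move=> [hV h01]; have hV' := hV; move: hV' => [hnn [h00 [hT1 hT2]]].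
pose y1 := fun s1 => at_ xi s1 None.
have hf1 : flow T1 y1 := fun X ho => hT1 X None ho erefl erefl.
have hnn1 : forall s, isSeq T1 s -> 0 <= y1 s by move=> s _; apply: at_ge0.
have [pi1 hpos1] := plan_pos hnn1 hf1 (ltac:(by rewrite /y1 h00 ltr01)).
have hone : forall s, inPi s pi1 -> y1 s = 1.
  move=> s hs; case: (h01 s (inPi_isSeq hs)) => // e.
  by move: (hpos1 s hs); rewrite /y1 e ltxx.
pose z s := y1 s - (inPi s pi1)%:R.
have hz0 : forall s, isSeq T1 s -> z s = 0.
  apply: (flow_zero (i := T1) (z := z)).
  - move=> s hs; rewrite /z; case: (boolP (inPi s pi1)) => h.
      by rewrite hone // subrr.
    by rewrite subr0; apply: hnn1.
  - move=> X ho; rewrite /z sumrB (hf1 X ho).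
    by rewrite (plan_flow R pi1 ho).
  - by rewrite /z hone //= subrr.
have hzero : forall s1, isSeq T1 s1 -> ~~ inPi s1 pi1 -> at_ xi s1 None = 0.
  by move=> s hs hn; have := hz0 s hs; rewrite /z (negbTE hn) subr0.
pose y2 := fun s2 => at_ xi None s2.
have hf2 : flow T2 y2 := fun J ho => hT2 J None ho erefl erefl.
have hnn2 : forall s, isSeq T2 s -> 0 <= y2 s by move=> s _; apply: at_ge0.
have [mu2 [hmu2 hsum2]] := decomp hnn2 hf2.
have key : forall s1 s2, relevant s1 s2 -> at_ xi s1 s2 = (inPi s1 pi1)%:R * y2 s2.
  move=> s1 s2 hr; case: (boolP (inPi s1 pi1)) => h.
    by rewrite mul1r (walk1_eq hV hzero hr h).
  rewrite mul0r; apply/eqP; rewrite eq_le at_ge0 // andbT.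
  have hs1 : isSeq T1 s1 by case/and3P: hr.
  by rewrite -(hzero s1 hs1 h) walk2_le.
exists [ffun p : P => (p.1 == pi1)%:R * mu2 p.2]; split; [|split].
- by move=> p; rewrite ffunE; apply: mulr_ge0 => //; exact: ler0n.
- rewrite (eq_bigr (fun p : P => (p.1 == pi1)%:R * mu2 p.2)); last by move=> p _; rewrite ffunE.
  rewrite -(pair_bigA _ (fun p1 p2 => (p1 == pi1)%:R * mu2 p2)) /=.
  rewrite (eq_bigr (fun p1 => (p1 == pi1)%:R * \sum_p2 mu2 p2)); last first.
    by move=> p1 _; rewrite mulr_sumr.
  rewrite sum_deltaT'.
  rewrite -h00 -/(y2 None) (hsum2 None erefl).
  by apply: eq_bigl.
- apply/ffunP => k; rewrite ffunE.
  have hk := valP k.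
  rewrite -(at_val xi k) (key _ _ hk).
  rewrite (eq_bigr (fun p : P => (p.1 == pi1)%:R * mu2 p.2)); last by move=> p _; rewrite ffunE.
  rewrite (sum_prod (fun p1 => (p1 == pi1)%:R) mu2 (fun p1 => inPi (val k).1 p1)
     (fun p2 => inPi (val k).2 p2)).
  rewrite sum_delta -(hsum2 _ _) //.
  by case/and3P: hk.
Qed.

End Xi3.

Section Xi4.
Variable R : realType.
Local Open Scope ring_scope.
Local Notation P := (plan G T1 * plan G T2)%type.
Local Notation M := {ffun RP G -> R^o}.

Definition dlt (q : P) : {ffun P -> R} := [ffun p => (p == q)%:R].

Lemma at_dlt q s1 s2 : relevant s1 s2 ->
  at_ (fmap (dlt q)) s1 s2 = (inPi s1 q.1)%:R * (inPi s2 q.2)%:R.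
Proof.
move=> h; rewrite at_fmap //.
rewrite (eq_bigr (fun p => (p == q)%:R * ((inPi s1 p.1)%:R * (inPi s2 p.2)%:R))).
  by rewrite sum_deltaT'.
by move=> p _; rewrite ffunE.
Qed.

Lemma dlt_star q : XiStar1 (fmap (dlt q)) /\ XiStar2 (fmap (dlt q)).
Proof.
have hV : VT (fmap (dlt q)).
  apply: XiT_VT; first by move=> p; rewrite ffunE ler0n.
  rewrite (bigD1 q) //= ffunE eqxx big1 ?addr0 // => p /negbTE hp.
  by rewrite ffunE hp.
split; split => // s hs.
  rewrite at_dlt; last by rewrite /relevant hs.
  by case: (inPi s q.2); [right | left]; rewrite /= ?mulr1 ?mulr0.
rewrite at_dlt; last by case: s hs => [[X a]|] hs; rewrite /relevant hs.
by case: (inPi s q.1); [right | left]; rewrite /= ?mulr1 ?mul0r.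
Qed.

Lemma fmap_sum (mu : {ffun P -> R}) :
  (fmap mu : M) = \sum_p mu p *: (fmap (dlt p) : M).
Proof.
apply/ffunP => k; rewrite sum_ffunE ffunE.
transitivity (\sum_p mu p * (inPi (val k).1 p.1 && inPi (val k).2 p.2)%:R).
  rewrite big_mkcond; apply: eq_bigr => p _.
  by case: (_ && _); rewrite ?mulr1 ?mulr0.
apply: eq_bigr => p _; rewrite !ffunE.
rewrite (eq_bigr (fun q => (q == p)%:R)); last by move=> q _; rewrite ffunE.
by rewrite sum_delta.
Qed.

Lemma XiT_co (x : {ffun RP G -> R}) : XiT x ->
  co (M := M) (fun xi => XiStar1 xi /\ XiStar2 xi) x.
Proof.
move=> [mu [hmu [hs ->]]].
exists #|{: P}|, (fun j => mu (enum_val j)), (fun j => fmap (dlt (enum_val j)) : M).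
split; [|split; [|split]].
- by move=> j; apply: hmu.
- by rewrite -hs -(big_enum_val (A := {: P}) mu); apply: eq_bigl => p; rewrite inE.
- by move=> j; apply: dlt_star.
- rewrite fmap_sum -(big_enum_val (A := {: P}) (fun p => mu p *: (fmap (dlt p) : M))).
  by apply: eq_bigl => p; rewrite inE.
Qed.

Lemma co_mono (S T : M -> Prop) x : (forall y, S y -> T y) -> co S x -> co T x.
Proof.
move=> hST [n [w [y [hw [hsw [hy ->]]]]]].
by exists n, w, y; split; [|split; [|split]] => // j; apply: hST.
Qed.

Lemma co_XiT (S : M -> Prop) : (forall xi, S xi -> XiT xi) -> forall x, co S x -> XiT x.
Proof.
move=> hS x [n [w [y [hw [hsw [hy ->]]]]]].
have hy' : forall j, exists mu : {ffun P -> R},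
    (forall p, 0 <= mu p) /\ \sum_p mu p = 1 /\ y j = fmap mu := fun j => hS _ (hy j).
have [mus hmus] := fin_all_exists hy'.
exists [ffun p => \sum_j w j * mus j p]; split; [|split].
- move=> p; rewrite ffunE; apply: sumr_ge0 => j _; apply: mulr_ge0 => //.
  exact: (hmus j).1.
- rewrite (eq_bigr (fun p => \sum_j w j * mus j p)); last by move=> p _; rewrite ffunE.
  rewrite exchange_big /= -hsw; apply: eq_bigr => j _.
  by rewrite -mulr_sumr (hmus j).2.1 mulr1.
- apply/ffunP => k; rewrite sum_ffunE [in RHS]ffunE.
  rewrite (eq_bigr (fun p => \sum_j w j * mus j p)); last by move=> p _; rewrite ffunE.
  rewrite exchange_big /=; apply: eq_bigr => j _.
  rewrite ffunE (hmus j).2.2 ffunE -mulr_sumr.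
  by [].
Qed.

Lemma main_inner :
  set_eq (@XiT G R) (co (M := M) (@XiStar1 G R)) /\
  set_eq (@XiT G R) (co (M := M) (@XiStar2 G R)) /\
  set_eq (@XiT G R) (co (M := M) (fun xi => @XiStar1 G R xi \/ @XiStar2 G R xi)).
Proof.
split; [|split] => x; split.
- by move=> h; apply: co_mono (XiT_co h) => y [].
- by move=> h; apply: (co_XiT (@star1_XiT R) h).
- by move=> h; apply: co_mono (XiT_co h) => y [].
- by move=> h; apply: (co_XiT (@star2_XiT R) h).
- by move=> h; apply: co_mono (XiT_co h) => y [h1 _]; left.
- move=> h; apply: (co_XiT _ h) => xi [h'|h'].
    exact: star1_XiT.
  exact: star2_XiT.
Qed.

End Xi4.
End Tree.

Theorem proposition3 (R : realType) (G : efg) :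
  wf_game G ->
  set_eq (@XiT G R) (co (M := {ffun RP G -> R^o}) (@XiStar1 G R)) /\
  set_eq (@XiT G R) (co (M := {ffun RP G -> R^o}) (@XiStar2 G R)) /\
  set_eq (@XiT G R)
         (co (M := {ffun RP G -> R^o}) (fun xi => @XiStar1 G R xi \/ @XiStar2 G R xi)).
Proof.
move=> wf; exact: (main_inner wf R).
Qed.
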